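(* Let $\mathbb{F}_q$ be any finite field and let $\mathcal{Q}=\mathbb{F}_q^3$ with the relation: $(x_1,y_1,z_1)$ and $(x_2,y_2,z_2)$ commute iff $x_1y_2-y_1x_2=z_1-z_2$. Then there exist two lines $L_1,L_2$ in $\mathbb{F}_q^3$ such that $L_1\cup L_2$ is a non-commuting subset of $\mathcal{Q}$ of cardinality $2q$ which is not contained in any strictly larger non-commuting subset of $\mathcal{Q}$.
   Context: A line in $\mathbb{F}_q^3$ is a set $\{p+tv: t\in\mathbb{F}_q\}$ with $p\in\mathbb{F}_q^3$, $v\in\mathbb{F}_q^3\setminus\{0\}$. A subset of $\mathcal{Q}$ is non-commuting if no two distinct elements of it commute. *)

(* Defs.v *)
From HB Require Import structures.
From mathcomp Require Import all_boot all_order all_algebra all_field.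
Set Implicit Arguments. Unset Strict Implicit. Unset Printing Implicit Defensive.
Import GRing.Theory.
Local Open Scope ring_scope.

(* Points of F_q^3 are triples ((x, y), z) : F * F * F. *)

Definition qcommute (F : fieldType) (a b : F * F * F) : bool :=
  a.1.1 * b.1.2 - a.1.2 * b.1.1 == a.2 - b.2.

Definition is_line (F : finFieldType) (L : {set F * F * F}) : Prop :=
  exists (p v : F * F * F), v != (0, 0, 0) /\
    L = [set ((p.1.1 + t * v.1.1, p.1.2 + t * v.1.2), p.2 + t * v.2) | t : F].

Definition non_commuting (F : finFieldType) (S : {set F * F * F}) : Prop :=
  forall a b, a \in S -> b \in S -> a != b -> ~~ qcommute a b.

(* Main.v *)
Require Import Defs.
From HB Require Import structures.
From mathcomp Require Import all_boot all_order all_algebra all_field.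
From mathcomp Require Import ring.
Set Implicit Arguments. Unset Strict Implicit. Unset Printing Implicit Defensive.
Import GRing.Theory.
Local Open Scope ring_scope.

Section S.
Variable F : finFieldType.
Definition L1 : {set F * F * F} :=
  [set (((0:F) + t * 1, (0:F) + t * 0), (0:F) + t * 1) | t : F].
Definition L2 : {set F * F * F} :=
  [set (((0:F) + t * 1, (1:F) + t * 0), (1:F) + t * 0) | t : F].

Lemma inL1 a : (a \in L1) = (a.1.2 == 0) && (a.2 == a.1.1).
Proof.
case: a => [[x y] z] /=; apply/imsetP/andP => [[t _ [-> -> ->]]|[/eqP -> /eqP ->]].
  by rewrite !mulr0 !mulr1 !add0r.
by exists x => //; rewrite !mulr0 !mulr1 !add0r.
Qed.

Lemma inL2 a : (a \in L2) = (a.1.2 == 1) && (a.2 == 1).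
Proof.
case: a => [[x y] z] /=; apply/imsetP/andP => [[t _ [hx hy hz]]|[/eqP -> /eqP ->]].
  by rewrite hy hz !mulr0 !addr0.
by exists x => //; rewrite !mulr0 !mulr1 !add0r !addr0.
Qed.

Lemma cardL (f : F -> F * F * F) : injective f -> #|[set f t | t : F]| = #|F|.
Proof. by move=> fi; rewrite card_imset //= cardT. Qed.
Lemma inj1 (x y : F) (A B C D : F) :
  ((0 + x * 1, A), B) = ((0 + y * 1, C), D) -> x = y.
Proof. by case; rewrite !add0r !mulr1. Qed.
End S.

Theorem lemma7p3 (F : finFieldType) :
  exists L1 L2 : {set F * F * F},
    [/\ is_line L1, is_line L2,
        non_commuting (L1 :|: L2),
        #|L1 :|: L2| = (2 * #|F|)%N &
        forall T : {set F * F * F},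
          non_commuting T -> (L1 :|: L2) \subset T -> T = L1 :|: L2].
Proof.
have key : forall b : F * F * F, b \notin L1 F :|: L2 F ->
    exists2 a, a \in L1 F :|: L2 F & qcommute a b.
  case=> [[x y] z]; rewrite in_setU inL1 inL2 /= => Hb.
  case: (eqVneq y 1) => [->|hy].
    exists ((1 + x - z, 1), 1); first by rewrite in_setU inL2 /= !eqxx orbT.
    by rewrite /qcommute /=; apply/eqP; ring.
  have h1 : 1 - y != 0 by rewrite subr_eq0 eq_sym.
  exists ((z / (1 - y), 0), z / (1 - y)); first by rewrite in_setU inL1 /= !eqxx.
  rewrite /qcommute /=; apply/eqP.
  have ht := divfK h1 z; set t := z / (1 - y) in ht *.
  rewrite -[in RHS]ht; ring.
have disj : [disjoint L1 F & L2 F].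
  apply/pred0P => a /=; rewrite inL1 inL2; apply/negP => /andP[/andP[/eqP -> _]].
  by rewrite eq_sym oner_eq0.
exists (L1 F), (L2 F); split.
- by exists (0, 0, 0), (1, 0, 1); split => //; apply/negP => /eqP [] /eqP; rewrite oner_eq0.
- by exists (0, 1, 1), (1, 0, 0); split => //; apply/negP => /eqP [] /eqP; rewrite oner_eq0.
- case=> [[x1 y1] z1] [[x2 y2] z2]; rewrite !in_setU !inL1 !inL2 /= /qcommute /=.
  case/orP=> /andP[/eqP -> /eqP ->]; case/orP=> /andP[/eqP -> /eqP ->] hne;
    apply/negP => /eqP h; move: hne; apply/negP; rewrite negbK.
  + have e : x1 - x2 = 0 by rewrite -h; ring.
    by move/eqP: e; rewrite subr_eq0 => /eqP ->.
  + have : (1:F) = 0 by transitivity ((x1*1 - 0*x2) - (x1 - 1)); [ring | rewrite h subrr].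
    by move/eqP; rewrite oner_eq0.
  + have : (1:F) = 0 by transitivity ((1 - x2) - (x1*0 - 1*x2)); [ring | rewrite h subrr].
    by move/eqP; rewrite oner_eq0.
  + have e : x1 - x2 = 0 by transitivity (x1*1 - 1*x2); [ring | rewrite h subrr].
    by move/eqP: e; rewrite subr_eq0 => /eqP ->.
- rewrite cardsU disjoint_setI0 // cards0 subn0 !cardL ?addnn ?mul2n //;
  move=> x y h; apply: (inj1 h).
move=> T hT hsub; apply/eqP; rewrite eqEsubset hsub andbT.
apply/subsetP => b bT; apply/negPn/negP => hb.
have [a aS ab] := key b hb.
have aT := subsetP hsub a aS.
have : a != b by apply: contraNneq hb => <-.
by move/(hT a b aT bT); rewrite ab.
Qed.
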